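(* Let $k$ be an algebraically closed field of characteristic $0$, $V$ a finite-dimensional $k$-vector space, $h\in\mathrm{End}_k(V)$ such that $0$ is an eigenvalue of $h$ of algebraic multiplicity exactly $1$, $\iota\in V$ and $p\in V^*$. Then it is impossible that $p(h^{n+1}\iota)=\mathrm{tr}_V(h^n)$ for all $n\ge0$.
   Context: Here $h^0=\mathrm{id}_V$, so $\mathrm{tr}_V(h^0)=\dim V$. *)

(* Defs.v *)
From mathcomp Require Import all_boot all_order all_algebra.
Set Implicit Arguments. Unset Strict Implicit. Unset Printing Implicit Defensive.

(* Main.v *)
Require Import Defs.
From mathcomp Require Import all_boot all_order all_algebra.
Import GRing.Theory.
Local Open Scope ring_scope.

Lemma trace_idem_aux (F : fieldType) n r (C : 'M[F]_(n, r)) (B : 'M[F]_(r, n)) :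
  row_full C -> row_free B -> (C *m B) *m (C *m B) = C *m B -> B *m C = 1%:M.
Proof.
move=> fC fB EE.
apply: (row_free_inj fB); apply: (row_full_inj fC).
by rewrite mul1mx !mulmxA -[C *m B *m C *m B]mulmxA EE.
Qed.

Lemma trace_idem (F : fieldType) n (E : 'M[F]_n) : E *m E = E -> \tr E = (\rank E)%:R.
Proof.
move=> EE.
rewrite -(mulmx_base E) in EE; rewrite -{1}(mulmx_base E).
by rewrite mxtrace_mulC (@trace_idem_aux F _ _ _ _ (col_base_full E) (row_base_free E) EE) mxtrace1.
Qed.

Theorem mainTheorem13 (k : closedFieldType) (char0 : [pchar k] =i pred0)
  (m : nat) (h : 'M[k]_m.+1) (iota : 'cV[k]_m.+1) (p : 'rV[k]_m.+1)
  (hmult : mup 0 (char_poly h) = 1%N) :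
  ~ (forall n : nat, (p *m (h ^+ n.+1) *m iota) 0 0 = \tr (h ^+ n)).
Proof.
move=> H.
set c := char_poly h.
have c0 : c != 0 by rewrite monic_neq0 // char_poly_monic.
have rc : root c 0.
  rewrite -dvdp_XsubCl -(expr1 ('X - 0%:P)) -mup_geq //.
  by rewrite /c hmult.
have [g cg] := factor_theorem _ _ rc.
rewrite polyC0 subr0 in cg.
have g0 : g != 0 by apply: contraNneq c0; rewrite cg => ->; rewrite mul0r.
have gr : ~~ root g 0.
  apply/negP => rg.
  move: hmult; rewrite -/c cg mupM ?polyX_eq0 //.
  have := mup_XsubCX 1 (0:k) 0; rewrite eqxx expr1 polyC0 subr0 => ->.
  have : (1 <= mup 0 g)%N by rewrite mup_geq // expr1 dvdp_XsubCl.
  by case: (mup 0 g) => [|[|]].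
set a := g.[0].
have a0 : a != 0 by move: gr; rewrite /root.
have rq : root (g - a%:P) 0 by rewrite /root hornerD hornerN hornerC subrr.
have [q gq] := factor_theorem _ _ rq.
rewrite polyC0 subr0 in gq.
have gq' : g = a%:P + 'X * q by rewrite -(mulrC q) -gq addrC subrK.
set M := horner_mx h g.
set Q := horner_mx h q.
have Mh : M *m h = 0.
  have := Cayley_Hamilton h; rewrite -/c cg rmorphM /= horner_mx_X => <-. by [].
have hM : h *m M = 0.
  have := Cayley_Hamilton h; rewrite -/c cg mulrC rmorphM /= horner_mx_X => <-. by [].
have Mdef : M = a%:M + h *m Q.
  by rewrite /M {1}gq' rmorphD rmorphM /= horner_mx_C horner_mx_X.
have MM : M *m M = a *: M.
  by rewrite {2}Mdef mulmxDr mul_mx_scalar mulmxA Mh mul0mx addr0.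
have [v vh vn] : exists2 v : 'rV[k]_m.+1, v *m h = 0 & v != 0.
  have : eigenvalue h 0 by rewrite eigenvalue_root_char.
  by case/eigenvalueP => v; rewrite scale0r => ? ?; exists v.
have M0 : M != 0.
  apply: contraNneq vn => M0.
  have : v *m M = a *: v by rewrite Mdef mulmxDr mul_mx_scalar mulmxA vh mul0mx addr0.
  rewrite M0 mulmx0 => /esym/eqP; rewrite scaler_eq0 (negPf a0) /= => /eqP.
  by move=> ->.
set E := a^-1 *: M.
have EE : E *m E = E.
  by rewrite /E -scalemxAl -scalemxAr MM scalerA scalerA mulrC mulrA mulfV // mul1r.
have E0 : E != 0 by rewrite scaler_eq0 invr_eq0 negb_or a0.
have trE : \tr E != 0.
  rewrite trace_idem //.
  have /pcharf0P -> := char0.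
  by rewrite mxrank_eq0.
have Msum : M = \sum_(i < size g) g`_i *: h ^+ i.
  rewrite /M -{1}[g]coefK poly_def rmorph_sum /=.
  by apply: eq_bigr => i _; rewrite linearZ /= rmorphXn /= horner_mx_X.
have trM : \tr M = 0.
  have : (p *m (h *m M) *m iota) 0 0 = 0 by rewrite hM mulmx0 mul0mx mxE.
  rewrite Msum mulmx_sumr mulmx_sumr mulmx_suml summxE => eq0.
  apply: (etrans _ eq0).
  rewrite raddf_sum /=; apply: eq_bigr => i _.
  by rewrite mxtraceZ -H exprS -[h * _]/(h *m _) -!scalemxAr -scalemxAl [RHS]mxE.
move: trE; rewrite /E mxtraceZ trM mulr0 eqxx. by [].
Qed.
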